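(* Let $f$ be an affine signal flow graph with initial state $f_0$. For every finite computation $t\vdash f_0\xrightarrow[v_t]{u_t}f_1\xrightarrow[v_{t+1}]{u_{t+1}}\cdots\xrightarrow[v_{t+n-1}]{u_{t+n-1}}f_n$ (starting at time $t\le 0$) there exists a trajectory $\sigma\in[\![f]\!]_{op}$ such that $\sigma(i)=(u_i,v_i)$ for all $t\le i\le t+n-1$.
   Context: Fix a field $k$. Circuits: terms built from generators with sorts $(n,m)$: copier $\Delta:(1,2)$, discard $!:(1,0)$, amplifier $\mathsf{s}_r:(1,1)$ ($r\in k$), register $\mathsf{x}:(1,1)$, adder $+:(2,1)$, zero $0:(0,1)$, one $\mathbf{1}:(0,1)$; mirror images $\Delta^{op}:(2,1)$, $!^{op}:(0,1)$, $\mathsf{s}_r^{op}$, $\mathsf{x}^{op}:(1,1)$, $+^{op}:(1,2)$, $0^{op}:(1,0)$, $\mathbf{1}^{op}:(1,0)$; $\mathrm{id}_0:(0,0),\mathrm{id}_1:(1,1),\mathrm{sw}:(2,2)$; closed under $;$ and $\oplus$. Feedback: for $c:(n+1,m+1)$, $\mathrm{Tr}(c):(n,m)$ connects the last right port of $c$ to its last left port through a register $\mathsf x$, the wire being bent with the cup $!^{op};\Delta:(0,2)$ and the cap $\Delta^{op};!:(2,0)$. Affine signal flow graphs are the circuits in the smallest class containing $\Delta,!,\mathsf s_r,\mathsf x,+,0,\mathbf 1,\mathrm{id}_0,\mathrm{id}_1,\mathrm{sw}$ and closed under $;$, $\oplus$ and $\mathrm{Tr}$. Operational semantics: a state is a circuit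 with a value of $k$ in each register; initial state stores $0$ everywhere. Transitions $t\vdash c\xrightarrow[w]{v}c'$ at time $t\in\mathbb Z$ (moving to time $t+1$): $\Delta$: $a/(a,a)$; $!$: $a/\bullet$; $+$: $(a,b)/a+b$; $0$: $\bullet/0$; $\mathsf s_r$: $a/ra$; $\mathsf x$ storing $b$: $a/b$, then stores $a$; $\mathbf 1$: $\bullet/1$ if $t=0$, $\bullet/0$ otherwise; mirrored generators: same with left/right exchanged; $\mathrm{id}_1$: $a/a$; $\mathrm{sw}$: $(a,b)/(b,a)$; $\mathrm{id}_0$: $\bullet/\bullet$; in $c;d$ both components move at the same time agreeing on the shared middle label; in $c\oplus d$ both move with labels concatenated. A computation starting at $t\le0$ is a sequence of transitions from the initial state at times $t,t+1,\dots$. An $(n,m)$-trajectory is $\sigma:\mathbb Z\to k^n\times k^m$ equal to $(0,0)$ at all sufficiently small indices. $[\![f]\!]_{op}$ is the set of trajectories of infinite computations of $f$: $\sigma(i)=(u_i,v_i)$ (the labels of the transition at time $i$) for $i\ge t$, and $(0,0)$ for $i<t$. *)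

(* Defs.v *)
From mathcomp Require Import all_boot all_algebra.
Set Implicit Arguments. Unset Strict Implicit. Unset Printing Implicit Defensive.
Import GRing.Theory Num.Theory.
Local Open Scope ring_scope.

Section Circuits.
Variable k : fieldType.

(* Circuit terms.  A register carries its current contents, so a term is also
   a state; [init] puts 0 in every register. *)
Inductive circ : Type :=
| Copy | Disc | Amp of k | Reg of k | Add | Zero | One
| CopyOp | DiscOp | AmpOp of k | RegOp of k | AddOp | ZeroOp | OneOp
| Id0 | Id1 | Sw
| Seq of circ & circ
| Par of circ & circ.

Fixpoint init (c : circ) : circ :=
  match c with
  | Reg _ => Reg 0
  | RegOp _ => RegOp 0
  | Seq c d => Seq (init c) (init d)
  | Par c d => Par (init c) (init d)
  | c => c
  end.

Fixpoint idn (n : nat) : circ :=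
  match n with 0 => Id0 | n'.+1 => Par (idn n') Id1 end.

Definition cup : circ := Seq DiscOp Copy.
Definition cap : circ := Seq CopyOp Disc.

(* Feedback of c : (n+1, m+1), through a register. *)
Definition Tr (n m : nat) (c : circ) : circ :=
  Seq (Seq (Seq (Par (idn n) cup) (Par c Id1))
           (Par (Par (idn m) (Reg 0)) Id1))
      (Par (idn m) cap).

Inductive asfg : circ -> nat -> nat -> Prop :=
| asfg_copy : asfg Copy 1 2
| asfg_disc : asfg Disc 1 0
| asfg_amp r : asfg (Amp r) 1 1
| asfg_reg : asfg (Reg 0) 1 1
| asfg_add : asfg Add 2 1
| asfg_zero : asfg Zero 0 1
| asfg_one : asfg One 0 1
| asfg_id0 : asfg Id0 0 0
| asfg_id1 : asfg Id1 1 1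
| asfg_sw : asfg Sw 2 2
| asfg_seq c d n l m : asfg c n l -> asfg d l m -> asfg (Seq c d) n m
| asfg_par c d n1 m1 n2 m2 : asfg c n1 m1 -> asfg d n2 m2 ->
    asfg (Par c d) (n1 + n2) (m1 + m2)
| asfg_tr c n m : asfg c n.+1 m.+1 -> asfg (Tr n m c) n m.

(* Transitions  t |- c --u/v--> c'  (u: left labels, v: right labels). *)
Inductive step (t : int) : circ -> seq k -> seq k -> circ -> Prop :=
| st_copy a : step t Copy [:: a] [:: a; a] Copy
| st_disc a : step t Disc [:: a] [::] Disc
| st_add a b : step t Add [:: a; b] [:: a + b] Add
| st_zero : step t Zero [::] [:: 0] Zero
| st_amp r a : step t (Amp r) [:: a] [:: r * a] (Amp r)
| st_reg a b : step t (Reg b) [:: a] [:: b] (Reg a)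
| st_one : step t One [::] [:: if t == 0 then 1 else 0] One
| st_copyop a : step t CopyOp [:: a; a] [:: a] CopyOp
| st_discop a : step t DiscOp [::] [:: a] DiscOp
| st_addop a b : step t AddOp [:: a + b] [:: a; b] AddOp
| st_zeroop : step t ZeroOp [:: 0] [::] ZeroOp
| st_ampop r a : step t (AmpOp r) [:: r * a] [:: a] (AmpOp r)
| st_regop a b : step t (RegOp b) [:: b] [:: a] (RegOp a)
| st_oneop : step t OneOp [:: if t == 0 then 1 else 0] [::] OneOp
| st_id1 a : step t Id1 [:: a] [:: a] Id1
| st_sw a b : step t Sw [:: a; b] [:: b; a] Sw
| st_id0 : step t Id0 [::] [::] Id0
| st_seq c c' d d' u w v :
    step t c u w c' -> step t d w v d' -> step t (Seq c d) u v (Seq c' d')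
| st_par c c' d d' u1 v1 u2 v2 :
    step t c u1 v1 c' -> step t d u2 v2 d' ->
    step t (Par c d) (u1 ++ u2) (v1 ++ v2) (Par c' d').

Definition fin_comp (f : circ) (t : int) (len : nat)
  (s : int -> circ) (u v : int -> seq k) : Prop :=
  (t <= 0) /\ s t = init f /\
  forall i : int, t <= i -> i < t + len%:Z -> step i (s i) (u i) (v i) (s (i + 1)).

Definition inf_comp (f : circ) (t : int)
  (s : int -> circ) (u v : int -> seq k) : Prop :=
  (t <= 0) /\ s t = init f /\
  forall i : int, t <= i -> step i (s i) (u i) (v i) (s (i + 1)).

Definition zeros (n : nat) : seq k := nseq n 0.

Definition trajectory (n m : nat) (sigma : int -> seq k * seq k) : Prop :=
  (forall i, size (sigma i).1 = n /\ size (sigma i).2 = m) /\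
  exists N : int, forall i, i <= N -> sigma i = (zeros n, zeros m).

Definition op_sem (n m : nat) (f : circ) (sigma : int -> seq k * seq k) : Prop :=
  trajectory n m sigma /\
  exists t s u v, inf_comp f t s u v /\
    forall i : int, (t <= i -> sigma i = (u i, v i)) /\
                    (i < t -> sigma i = (zeros n, zeros m)).

End Circuits.

(* Main.v *)
Require Import Defs.
From mathcomp Require Import all_boot all_algebra zify.
From Stdlib Require Import Classical ClassicalEpsilon.
Set Implicit Arguments. Unset Strict Implicit. Unset Printing Implicit Defensive.
Import GRing.Theory Num.Theory.
Local Open Scope ring_scope.

Arguments Copy {k}. Arguments Disc {k}. Arguments Add {k}. Arguments Zero {k}. Arguments One {k}.
Arguments CopyOp {k}. Arguments DiscOp {k}. Arguments AddOp {k}. Arguments ZeroOp {k}. Arguments OneOp {k}.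
Arguments Id0 {k}. Arguments cup {k}. Arguments cap {k}. Arguments Id1 {k}. Arguments Sw {k}.

Section S.
Variable k : fieldType.

Inductive srt : circ k -> nat -> nat -> Prop :=
| sr_copy : srt Copy 1 2
| sr_disc : srt Disc 1 0
| sr_amp r : srt (Amp r) 1 1
| sr_reg r : srt (Reg r) 1 1
| sr_add : srt Add 2 1
| sr_zero : srt Zero 0 1
| sr_one : srt One 0 1
| sr_copyop : srt CopyOp 2 1
| sr_discop : srt DiscOp 0 1
| sr_ampop r : srt (AmpOp r) 1 1
| sr_regop r : srt (RegOp r) 1 1
| sr_addop : srt AddOp 1 2
| sr_zeroop : srt ZeroOp 1 0
| sr_oneop : srt OneOp 1 0
| sr_id0 : srt Id0 0 0
| sr_id1 : srt Id1 1 1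
| sr_sw : srt Sw 2 2
| sr_seq c d n l m : srt c n l -> srt d l m -> srt (Seq c d) n m
| sr_par c d n1 m1 n2 m2 : srt c n1 m1 -> srt d n2 m2 ->
    srt (Par c d) (n1 + n2) (m1 + m2).

Lemma srt_size c n m : srt c n m -> forall t u v c', step t c u v c' ->
  size u = n /\ size v = m.
Proof.
elim=> [||r|r||||||r|r||||||| c1 c2 n1 l m1 _ IH1 _ IH2
       | c1 c2 n1 m1 n2 m2 _ IH1 _ IH2] t u0 v0 c' H; inversion H; subst => //.
- match goal with H1: step _ c1 _ _ _, H2 : step _ c2 _ _ _ |- _ => have [? ?] := IH1 _ _ _ _ H1; have [? ?] := IH2 _ _ _ _ H2 end; by subst.
- match goal with H1: step _ c1 _ _ _, H2 : step _ c2 _ _ _ |- _ => have [? ?] := IH1 _ _ _ _ H1; have [? ?] := IH2 _ _ _ _ H2 end.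
  by rewrite !size_cat; subst.
Qed.

Lemma idn_srt n : srt (idn k n) n n.
Proof. elim: n => [|n IH] /=; first exact: sr_id0.
rewrite -addn1; exact: sr_par IH sr_id1. Qed.

Lemma asfg_srt f n m : asfg f n m -> srt f n m.
Proof.
elim=> //; try by constructor.
- move=> *; apply: sr_seq; eassumption.
move=> c n0 m0 _ IH; rewrite /Tr.
have cast : forall c n m n' m', srt c n m -> n = n' -> m = m' -> srt c n' m'.
  by move=> ? ? ? ? ? ? <- <-.
have A : srt (Par (idn k n0) cup) n0 (n0 + 2).
  by apply: cast (sr_par (idn_srt n0) (sr_seq sr_discop sr_copy)) _ _; rewrite ?addn0.
have B : srt (Par c Id1) (n0 + 2) (m0 + 2).
  by apply: cast (sr_par IH sr_id1) _ _; rewrite addn1 addn2.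
have C : srt (Par (Par (idn k m0) (Reg 0)) Id1) (m0 + 2) (m0 + 2).
  by apply: cast (sr_par (sr_par (idn_srt m0) (sr_reg (0:k))) sr_id1) _ _; rewrite -addnA.
have D : srt (Par (idn k m0) cap) (m0 + 2) m0.
  by apply: cast (sr_par (idn_srt m0) (sr_seq sr_copyop sr_disc)) _ _; rewrite ?addn0.
exact: sr_seq (sr_seq (sr_seq A B) C) D.
Qed.

Lemma srt_init c n m : srt (init c) n m -> srt c n m.
Proof.
elim: c n m => /= [||r|r||||||r|r||||||| c1 IH1 c2 IH2 | c1 IH1 c2 IH2] n m H;
  inversion H; subst; try by constructor.
- apply: sr_seq; [apply: IH1|apply: IH2]; eassumption.
- apply: sr_par; [apply: IH1|apply: IH2]; eassumption.
Qed.

Lemma step_init t (c : circ k) u v c' : step t c u v c' -> init c' = init c.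
Proof. by elim=> //= *; congruence. Qed.

Lemma init_idem (c : circ k) : init (init c) = init c.
Proof. by elim: c => //= c1 -> c2 ->. Qed.

Lemma init_idn n : init (idn k n) = idn k n.
Proof. by elim: n => //= n ->. Qed.

Lemma asfg_init (f : circ k) n m : asfg f n m -> init f = f.
Proof. elim=> //= [c d *|c d *|c n0 m0 _ IH]; try congruence.
by rewrite /Tr /= !init_idn IH. Qed.


Lemma idn_step n (a : circ k) : init a = idn k n -> forall t u, size u = n -> step t a u u a.
Proof.
elim: n a => [|n IH] [] //=; try by move=> *; discriminate.
- move=> _ t [] // _; exact: st_id0.
move=> a1 [] //= [H1] t u; case/lastP: u => [|u x]; rewrite ?size_rcons //.
case=> Hs; rewrite -cats1; apply: st_par; first exact: IH.
exact: st_id1.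
Qed.

Lemma sizes (f : circ k) n m c t u v c' : asfg f n m -> init c = f ->
  step t c u v c' -> size u = n /\ size v = m.
Proof.
move=> Hf Hc; apply: srt_size; apply: srt_init; rewrite Hc; exact: asfg_srt.
Qed.

Ltac dec := repeat match goal with
 | H : Seq _ _ = Seq _ _ |- _ => injection H; clear H; intros
 | H : Par _ _ = Par _ _ |- _ => injection H; clear H; intros
 | H : init ?c = Seq _ _ |- _ => is_var c; destruct c; try discriminate H; simpl in H
 | H : init ?c = Par _ _ |- _ => is_var c; destruct c; try discriminate H; simpl in H
 | H : init ?c = DiscOp |- _ => is_var c; destruct c; try discriminate H; clear H
 | H : init ?c = CopyOp |- _ => is_var c; destruct c; try discriminate H; clear H
 | H : init ?c = Copy |- _ => is_var c; destruct c; try discriminate H; clear H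
 | H : init ?c = Disc |- _ => is_var c; destruct c; try discriminate H; clear H
 | H : init ?c = Id1 |- _ => is_var c; destruct c; try discriminate H; clear H
 | H : init ?c = Reg _ |- _ => is_var c; destruct c; try discriminate H; clear H
 end.

Lemma progress (f : circ k) n m : asfg f n m -> forall c, init c = f ->
  forall t u, size u = n -> exists v c', step t c u v c'.
Proof.
elim=> [||r||||||||c1 c2 n1 l m1 H1 IH1 H2 IH2
       | c1 c2 n1 m1 n2 m2 H1 IH1 H2 IH2 | f0 n0 m0 H IH].
all: try (case=> //= ; try (by move=> *; discriminate)).
all: try (move=> _ t u; case: u => [|a [|b [|]]] //= _; do 2 eexists; by constructor).
all: try (move=> s _ t u; case: u => [|a [|b [|]]] //= _; do 2 eexists; by constructor).
- move=> d1 d2 [E1 E2] t u Hu.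
  have [w [d1' S1]] := IH1 _ E1 t u Hu.
  have [_ Hw] := sizes H1 E1 S1.
  have [v [d2' S2]] := IH2 _ E2 t w Hw.
  do 2 eexists; exact: st_seq S1 S2.
- move=> d1 d2 [E1 E2] t u Hu.
  have Hu1 : size (take n1 u) = n1 by rewrite size_takel // Hu leq_addr.
  have Hu2 : size (drop n1 u) = n2 by rewrite size_drop Hu addKn.
  have [v1 [d1' S1]] := IH1 _ E1 t _ Hu1.
  have [v2 [d2' S2]] := IH2 _ E2 t _ Hu2.
  do 2 eexists; rewrite -(cat_take_drop n1 u); exact: st_par S1 S2.
move=> d1 d2; rewrite /Tr /cup /cap => E t u Hu.
dec.
match goal with |- exists v c', step _ (Seq (Seq (Seq (Par ?a1 _) (Par ?a0 _)) (Par (Par ?a2 (Reg ?r)) _)) (Par ?a3 _)) _ _ _ =>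
  rename a1 into c; rename a0 into c1; rename a2 into c2; rename r into s; rename a3 into d2 end.
have E7 : init c = idn k n0 by assumption.
have E6 : init c1 = f0 by assumption.
have E4 : init c2 = idn k m0 by assumption.
have E1 : init d2 = idn k m0 by assumption.
have S1 : step t (Par c (Seq DiscOp Copy)) u (u ++ [:: s; s]) (Par c (Seq DiscOp Copy)).
  by have := st_par (idn_step E7 t Hu) (st_seq (st_discop t s) (st_copy t s)); rewrite cats0.
have Hus : size (u ++ [:: s]) = n0.+1 by rewrite size_cat Hu addn1.
have [w [c1' Sc]] := IH _ E6 t _ Hus.
have [_ Hw] := sizes H E6 Sc.
move: Sc Hw; case/lastP: w => [|w1 b]; rewrite ?size_rcons // => Sc [Hw1].
have S2 : step t (Par c1 Id1) (u ++ [:: s; s]) (rcons w1 b ++ [:: s]) (Par c1' Id1).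
  by have := st_par Sc (st_id1 t s); rewrite -catA.
have S3 : step t (Par (Par c2 (Reg s)) Id1) (rcons w1 b ++ [:: s])
   ((w1 ++ [:: s]) ++ [:: s]) (Par (Par c2 (Reg b)) Id1).
  by have := st_par (st_par (idn_step E4 t Hw1) (st_reg t b s)) (st_id1 t s); rewrite -cats1.
have S4 : step t (Par d2 (Seq CopyOp Disc)) ((w1 ++ [:: s]) ++ [:: s]) w1
   (Par d2 (Seq CopyOp Disc)).
  by have := st_par (idn_step E1 t Hw1) (st_seq (st_copyop t s) (st_disc t s)); rewrite cats0 -catA.
do 2 eexists; exact: st_seq (st_seq (st_seq S1 S2) S3) S4.
Qed.

Lemma extend (f : circ k) n m (Hf : asfg f n m) (T : int) (c0 : circ k) :
  init c0 = f ->
  exists (e : nat -> circ k) (w : nat -> seq k), e 0%N = c0 /\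
    forall j : nat, init (e j) = f /\
      step (T + Posz j) (e j) (zeros k n) (w j) (e j.+1).
Proof.
move=> Hc0.
have H : forall (i : int) (c : circ k), exists p : seq k * circ k,
    init c = f -> step i c (zeros k n) p.1 p.2.
  move=> i c; case: (classic (init c = f)) => Hc; last by exists ([::], c).
  have [v [c' S]] := progress Hf Hc i (size_nseq n 0).
  by exists (v, c').
pose g i c := proj1_sig (constructive_indefinite_description _ (H i c)).
have Hg : forall i c, init c = f -> step i c (zeros k n) (g i c).1 (g i c).2.
  move=> i c; exact: (proj2_sig (constructive_indefinite_description _ (H i c))).
pose e := fix e (j : nat) : circ k :=
  match j with 0%N => c0 | j'.+1 => (g (T + Posz j') (e j')).2 end.
exists e, (fun j => (g (T + Posz j) (e j)).1); split => //.
elim => [|j [IHi IHs]].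
  split => //; exact: Hg.
have Ij : init (e j.+1) = f by rewrite (step_init IHs).
split => //; exact: Hg.
Qed.

End S.

Theorem proposition9 (k : fieldType) (f : circ k) (n m : nat) :
  asfg f n m ->
  forall (t : int) (len : nat) (s : int -> circ k) (u v : int -> seq k),
    fin_comp f t len s u v ->
    exists sigma : int -> seq k * seq k,
      op_sem n m f sigma /\
      forall i : int, t <= i -> i < t + len%:Z -> sigma i = (u i, v i).
Proof.
move=> Hf t len s u v [Ht [Hs0 Hst]].
have If := asfg_init Hf.
pose T := t + len%:Z.
have Hinv : forall j : nat, (j <= len)%N -> init (s (t + Posz j)) = f.
  elim=> [|j IH] Hj; first by rewrite addr0 Hs0 init_idem If.
  have Sj := Hst (t + Posz j) ltac:(lia) ltac:(lia).
  have -> : t + Posz j.+1 = t + Posz j + 1 by lia.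
  rewrite (step_init Sj); apply: IH; lia.
have IT : init (s T) = f := Hinv len (leqnn _).
have [e [w [E0 Ee]]] := extend Hf T IT.
pose s' i := if i < T then s i else e (absz (i - T)%R).
pose u' i := if i < T then u i else zeros k n.
pose v' i := if i < T then v i else w (absz (i - T)%R).
have Hinv' : forall i, t <= i -> init (s' i) = f.
  move=> i Hi; rewrite /s'; case: ifP => HiT; last by case: (Ee (absz (i - T)%R)).
  have -> : i = t + Posz (absz (i - t)%R) by lia.
  apply: Hinv; lia.
have Hstep : forall i, t <= i -> step i (s' i) (u' i) (v' i) (s' (i + 1)).
  move=> i Hi; rewrite /s' /u' /v'; case: ifP => HiT.
    have := Hst i Hi HiT; case: ifP => Hi1 //.
    have -> : i + 1 = T by lia.
    by rewrite subrr /= E0.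
  have -> : (i + 1 < T) = false by lia.
  have Hj1 : absz (i + 1 - T)%R = (absz (i - T)%R).+1 by lia.
  rewrite Hj1; have [_ S] := Ee (absz (i - T)%R).
  have Hj : T + Posz (absz (i - T)%R) = i by lia.
  by rewrite Hj in S.
pose sigma i := if i < t then (zeros k n, zeros k m) else (u' i, v' i).
exists sigma; split; last first.
  move=> i Hi HiT; rewrite /sigma /u' /v'.
  have -> : (i < t) = false by lia.
  by rewrite /T HiT.
split.
  split.
    move=> i; rewrite /sigma; case: ifP => Hit /=; first by rewrite !size_nseq.
    apply: (sizes Hf (Hinv' i ltac:(lia)) (Hstep i ltac:(lia))).
  exists (t - 1) => i Hi; rewrite /sigma.
  have -> : (i < t) = true by lia.
  by [].
exists t, s', u', v'; split.
  split=> //; split => //.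
  rewrite /s'; case: ifP => HtT //.
  have HT : T = t by lia.
  by rewrite HT subrr /= E0 HT.
move=> i; split => Hi; rewrite /sigma.
  have -> : (i < t) = false by lia.
  by [].
have -> : (i < t) = true by lia.
by [].
Qed.
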